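(* Let $\gamma$ be an Ehresmann connection on $M\times_NC$ whose $C$-component $\gamma_C$ is defined on $C$ (i.e. its components $\gamma^i_{jkl}$ are functions on $C$). Then the equations $\tilde\gamma_C=R^{\nabla^{(1)}}$ and $\mathrm{alt}_{12}\circ\gamma_C=\nabla^{(2)}\tau_N$ are locally equivalent to the equations $$\gamma^h_{str}-\gamma^h_{rts}=A^h_{rm}A^m_{st}-A^h_{sm}A^m_{rt},$$ $$\gamma^h_{rst}-\gamma^h_{srt}=A^h_{tm}(A^m_{rs}-A^m_{sr})+A^m_{ts}(A^h_{mr}-A^h_{rm})+A^m_{tr}(A^h_{sm}-A^h_{ms}),$$ for all indices $h,r,s,t$.
   Context: $N$ is a connected oriented $n$-manifold, $p_M\colon M\to N$ the bundle of pseudo-Riemannian metrics of a fixed signature, $p_C\colon C\to N$ the bundle of linear connections (fibre over $x$: values $\Gamma_x$ of linear connections at $x$), an affine bundle modelled on $\otimes^2T^*N\otimes TN$, so $V(p_C)\cong p_C^*(\otimes^2T^*N\otimes TN)$. Summation over repeated indices. A chart $(x^i)$ induces coordinates $(x^i,y_{ij})$ on $M$ and $(x^i,A^i_{jk})$ on $C$, $A^i_{jk}(\Gamma_x)=\Gamma^i_{jk}(x)$ (Christoffel symbols, $\nabla_{\partial_j}\partial_k=\Gamma^i_{jk}\partial_i$). An Ehresmann connection on $M\times_NC\to N$ is locally $\gamma=\sum_{i\le j}(dy_{ij}+\gamma_{ijk}dx^k)\otimes\partial/\partial y_{ij}+(dA^i_{jk}+\gamma^i_{jkl}dx^l)\otimes\partial/\partial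 A^i_{jk}$; its $C$-component is $\gamma_C=(dA^i_{jk}+\gamma^i_{jkl}dx^l)\otimes\partial/\partial A^i_{jk}$, viewed when defined on $C$ as a homomorphism $TC\to p_C^*(\otimes^2T^*N\otimes TN)$, $\gamma_C=(dA^i_{jk}+\gamma^i_{jkl}dx^l)\otimes dx^j\otimes dx^k\otimes\partial/\partial x^i$. The 2-form $\tilde\gamma_C$ on $C$ with values in $p_C^*(T^*N\otimes TN)$ is $\tilde\gamma_C(X,Y)=c^1_1((p_C)_*Y\otimes\gamma_C(X))-c^1_1((p_C)_*X\otimes\gamma_C(Y))$, where $c^1_1(X_1\otimes w_1\otimes w_2\otimes X_2)=w_1(X_1)\,w_2\otimes X_2$. For a tensorial vector bundle $E\to N$, the canonical covariant derivative $\nabla^E$ on $p_C^*E$ is determined by $((\nabla^E)_X(f\xi))(\Gamma_x)=(Xf)(\Gamma_x)\xi(x)+f(\Gamma_x)(\nabla^{\Gamma_x}_{(p_C)_*X}\xi)(x)$ for $X\in T_{\Gamma_x}C$, $f\in C^\infty(C)$, $\xi$ a local section of $E$, where $\nabla^{\Gamma_x}$ is the covariant derivative induced on $E$ by (any linear connection with value) $\Gamma_x$. $\nabla^{(1)}=\nabla^{E_1}$ with $E_1=TN$, $R^{\nabla^{(1)}}$ its curvature (a 2-form on $C$ with values in $p_C^*(T^*N\otimes TN)$), and $\nabla^{(2)}=\nabla^{E_2}$ with $E_2=\wedge^2T^*N\otimes TN$. $\tau_N$ is the section of $p_C^*(\wedge^2T^*N\otimes TN)$ given by $\tau_N(\Gamma_x)=$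 torsion of $\Gamma_x$; locally $\tau_N=\sum_{j<k}(A^i_{jk}-A^i_{kj})dx^j\wedge dx^k\otimes\partial/\partial x^i$. $\mathrm{alt}_{12}\colon\otimes^2T^*N\otimes TN\to\wedge^2T^*N\otimes TN$ alternates the two covariant arguments. *)

(* Defs.v *)
(* Local-coordinate model of the bundle
   of linear connections C -> N over a chart (x^i) of N. *)
From HB Require Import structures.
From mathcomp Require Import all_boot all_order all_algebra.
From mathcomp Require Import all_classical all_reals all_analysis.
Set Implicit Arguments. Unset Strict Implicit. Unset Printing Implicit Defensive.
Import Order.TTheory GRing.Theory Num.Theory.
Local Open Scope ring_scope.

Section Defs.
Variables (R : realType) (n : nat).

(* A point of C in the induced chart: coordinates (x^i, A^i_{jk}),
   with  (p.2 i j k) = A^i_{jk}(p).  A tangent vector to C has the same shape: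
   (v.1 l) = dx^l(v) (components of (p_C)_* v) and (v.2 i j k) = dA^i_{jk}(v). *)
Definition CPt := (('I_n -> R) * ('I_n -> 'I_n -> 'I_n -> R))%type.
Definition TV := CPt.

Definition shift (p : CPt) (v : TV) (t : R) : CPt :=
  (fun i => p.1 i + t * v.1 i, fun i j k => p.2 i j k + t * v.2 i j k).

Definition dirder (f : CPt -> R) (p : CPt) (v : TV) : R :=
  derive1 (fun t : R => f (shift p v t)) 0.

(* sections of p_C^* TN (components w.r.t. d/dx^i) *)
Definition sec1 := CPt -> 'I_n -> R.
Definition frame (k : 'I_n) : sec1 := fun _ i => (i == k)%:R.

(* canonical covariant derivative nabla^(1) along the constant vector field v:
   (nabla_v (s^k d_k))^i = v(s^i) + (p_* v)^j A^i_{jk} s^k *)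
Definition nabla1 (v : TV) (s : sec1) : sec1 := fun p i =>
  dirder (fun q => s q i) p v + \sum_(j < n) \sum_(k < n) v.1 j * p.2 i j k * s p k.

(* curvature R^{nabla^(1)}(v,w), an element of T^*N (x) TN with components
   curv p v w i k  (coefficient of dx^k (x) d/dx^i), computed on the constant
   (hence commuting) coordinate vector fields with values v, w *)
Definition curv1 (p : CPt) (v w : TV) (i k : 'I_n) : R :=
  nabla1 v (nabla1 w (frame k)) p i - nabla1 w (nabla1 v (frame k)) p i.

(* C-component of the Ehresmann connection, with components
   gam p i j k l = gamma^i_{jkl}(p) (functions on C) *)
Definition gamC (gam : CPt -> 'I_n -> 'I_n -> 'I_n -> 'I_n -> R)
  (p : CPt) (v : TV) (i j k : 'I_n) : R :=
  v.2 i j k + \sum_(l < n) gam p i j k l * v.1 l.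

(* tilde gamma_C (v,w): component of dx^k (x) d/dx^i *)
Definition tgamC gam (p : CPt) (v w : TV) (i k : 'I_n) : R :=
  \sum_(j < n) (w.1 j * gamC gam p v i j k - v.1 j * gamC gam p w i j k).

(* elements of wedge^2 T^*N (x) TN are represented by their (antisymmetric)
   arrays c i j k, the element being  sum_{j<k} c i j k dx^j /\ dx^k (x) d_i *)
Definition alt12 (B : 'I_n -> 'I_n -> 'I_n -> R) (i j k : 'I_n) : R :=
  B i j k - B i k j.

Definition tauN (p : CPt) (i j k : 'I_n) : R := p.2 i j k - p.2 i k j.

Definition nabla2 (v : TV) (T : CPt -> 'I_n -> 'I_n -> 'I_n -> R)
  (p : CPt) (i j k : 'I_n) : R :=
  dirder (fun q => T q i j k) p v +
  \sum_(l < n) v.1 l * \sum_(m < n)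
     (p.2 i l m * T p m j k - p.2 m l j * T p i m k - p.2 m l k * T p i j m).

End Defs.

(* Main.v *)
Require Import Defs.
From HB Require Import structures.
From mathcomp Require Import all_boot all_order all_algebra.
From mathcomp Require Import all_classical all_reals all_analysis.
From mathcomp Require Import ring.
Import Order.TTheory GRing.Theory Num.Theory.
Local Open Scope ring_scope.

Lemma aff (R : realType) (a b : R) : derive1 (fun t : R => a + t * b) 0 = b.
Proof.
have H : is_derive (0:R) (1:R) (fun t : R => a + t * b) b.
  by apply: is_derive_eq; rewrite add0r mul1r scaler0 add0r; apply: mulr1.
by rewrite derive1E; apply: derive_val.
Qed.

Section Helpers.
Variables (R : realType) (n : nat).

Lemma dirder_aff (f : CPt R n -> R) (p : CPt R n) (v : TV R n) (a b : R) :
  (forall t, f (Defs.shift p v t) = a + t * b) -> dirder f p v = b.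
Proof.
move=> H; rewrite /dirder (_ : (fun t => _) = (fun t => a + t * b)) ?aff //.
by apply: boolp.funext => t; exact: H.
Qed.

Lemma sum_delta (F : 'I_n -> R) (t : 'I_n) :
  \sum_(l < n) (l == t)%:R * F l = F t.
Proof.
rewrite (bigD1 t) //= eqxx mul1r big1 ?addr0 // => l /negbTE ->.
by rewrite mul0r.
Qed.

Lemma sum_delta2 (F : 'I_n -> 'I_n -> R) (r s : 'I_n) :
  \sum_(a < n) \sum_(b < n) (a == r)%:R * (b == s)%:R * F a b = F r s.
Proof.
rewrite -(sum_delta (fun a => F a s) r); apply: eq_bigr => a _.
rewrite -(sum_delta (fun b => (a == r)%:R * F a b) s); apply: eq_bigr => b _.
ring.
Qed.

Lemma nabla1_frame (w : TV R n) k :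
  nabla1 w (@frame R n k) = fun q i => \sum_(j < n) w.1 j * q.2 i j k.
Proof.
apply: boolp.funext => q; apply: boolp.funext => i.
rewrite /nabla1 (@dirder_aff _ q w ((i == k)%:R) 0) ?add0r; last first.
  by move=> t; rewrite mulr0 addr0.
apply: eq_bigr => j _.
rewrite (bigD1 k) //= /frame eqxx mulr1 big1 ?addr0 // => l /negbTE ->.
by rewrite mulr0.
Qed.

Lemma dirder_S (v w : TV R n) p i k :
  dirder (fun q : CPt R n => \sum_(j < n) w.1 j * q.2 i j k) p v
  = \sum_(j < n) w.1 j * v.2 i j k.
Proof.
apply: (@dirder_aff _ _ _ (\sum_(j < n) w.1 j * p.2 i j k)) => t /=.
rewrite mulr_sumr -big_split; apply: eq_bigr => j _ /=; ring.
Qed.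

Lemma X_form (p : CPt R n) (v w : TV R n) i k :
  \sum_(j < n) \sum_(m < n) v.1 j * p.2 i j m * (\sum_(l < n) w.1 l * p.2 m l k)
  = \sum_(a < n) \sum_(b < n) v.1 a * w.1 b *
       \sum_(m < n) p.2 i a m * p.2 m b k.
Proof.
apply: eq_bigr => a _.
under eq_bigr do rewrite mulr_sumr.
rewrite exchange_big; apply: eq_bigr => b _.
rewrite mulr_sumr; apply: eq_bigr => m _; ring.
Qed.

Lemma curv1E (p : CPt R n) (v w : TV R n) i k :
  curv1 p v w i k =
  \sum_(j < n) w.1 j * v.2 i j k - \sum_(j < n) v.1 j * w.2 i j k
  + \sum_(a < n) \sum_(b < n) v.1 a * w.1 b * \sum_(m < n) p.2 i a m * p.2 m b k
  - \sum_(a < n) \sum_(b < n) v.1 a * w.1 b * \sum_(m < n) p.2 i b m * p.2 m a k.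
Proof.
rewrite /curv1 !nabla1_frame /nabla1 !dirder_S !X_form.
have -> : \sum_(a < n) \sum_(b < n) w.1 a * v.1 b *
       \sum_(m < n) p.2 i a m * p.2 m b k =
   \sum_(a < n) \sum_(b < n) v.1 a * w.1 b *
       \sum_(m < n) p.2 i b m * p.2 m a k.
  by rewrite exchange_big; apply: eq_bigr => a _; apply: eq_bigr => b _; ring.
ring.
Qed.

Lemma tgamCE gam (p : CPt R n) (v w : TV R n) i k :
  tgamC gam p v w i k =
  \sum_(j < n) w.1 j * v.2 i j k - \sum_(j < n) v.1 j * w.2 i j k
  + \sum_(a < n) \sum_(b < n) v.1 a * w.1 b * gam p i b k a
  - \sum_(a < n) \sum_(b < n) v.1 a * w.1 b * gam p i a k b.
Proof.
rewrite /tgamC /gamC.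
have E : forall j, w.1 j * (v.2 i j k + \sum_(l < n) gam p i j k l * v.1 l) -
     v.1 j * (w.2 i j k + \sum_(l < n) gam p i j k l * w.1 l) =
     (w.1 j * v.2 i j k - v.1 j * w.2 i j k) +
     (\sum_(l < n) w.1 j * (gam p i j k l * v.1 l) -
      \sum_(l < n) v.1 j * (gam p i j k l * w.1 l)).
  by move=> j; rewrite !mulrDr !mulr_sumr; ring.
under eq_bigr do rewrite E.
rewrite big_split /= !sumrB.
have -> : \sum_(j < n) \sum_(l < n) w.1 j * (gam p i j k l * v.1 l) =
   \sum_(a < n) \sum_(b < n) v.1 a * w.1 b * gam p i b k a.
  rewrite exchange_big; apply: eq_bigr => a _; apply: eq_bigr => b _; ring.
have -> : \sum_(j < n) \sum_(l < n) v.1 j * (gam p i j k l * w.1 l) =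
   \sum_(a < n) \sum_(b < n) v.1 a * w.1 b * gam p i a k b.
  apply: eq_bigr => a _; apply: eq_bigr => b _; ring.
ring.
Qed.

Definition E1 gam (p : CPt R n) i k a b :=
  (gam p i b k a - gam p i a k b) -
  \sum_(m < n) (p.2 i a m * p.2 m b k - p.2 i b m * p.2 m a k).

Lemma diff1 gam (p : CPt R n) (v w : TV R n) i k :
  tgamC gam p v w i k - curv1 p v w i k =
  \sum_(a < n) \sum_(b < n) v.1 a * w.1 b * E1 gam p i k a b.
Proof.
rewrite tgamCE curv1E.
have -> : \sum_(a < n) \sum_(b < n) v.1 a * w.1 b * E1 gam p i k a b =
  (\sum_(a < n) \sum_(b < n) v.1 a * w.1 b * gam p i b k a
  - \sum_(a < n) \sum_(b < n) v.1 a * w.1 b * gam p i a k b)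
  - (\sum_(a < n) \sum_(b < n) v.1 a * w.1 b * \sum_(m < n) p.2 i a m * p.2 m b k
  - \sum_(a < n) \sum_(b < n) v.1 a * w.1 b * \sum_(m < n) p.2 i b m * p.2 m a k).
  rewrite -!sumrB; apply: eq_bigr => a _; rewrite -!sumrB; apply: eq_bigr => b _.
  by rewrite /E1 sumrB; ring.
ring.
Qed.

Definition E2 gam (p : CPt R n) i j k l :=
  (gam p i j k l - gam p i k j l) -
  \sum_(m < n) (p.2 i l m * (p.2 m j k - p.2 m k j)
                + p.2 m l k * (p.2 i m j - p.2 i j m)
                + p.2 m l j * (p.2 i k m - p.2 i m k)).

Lemma diff2 gam (p : CPt R n) (v : TV R n) i j k :
  alt12 (gamC gam p v) i j k - nabla2 v (@tauN R n) p i j k =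
  \sum_(l < n) v.1 l * E2 gam p i j k l.
Proof.
rewrite /alt12 /gamC /nabla2.
rewrite (@dirder_aff _ p v (tauN p i j k) (v.2 i j k - v.2 i k j)); last first.
  by move=> t; rewrite /tauN /=; ring.
have -> : \sum_(l < n) v.1 l * E2 gam p i j k l =
   (\sum_(l < n) gam p i j k l * v.1 l - \sum_(l < n) gam p i k j l * v.1 l)
   - \sum_(l < n) v.1 l * \sum_(m < n)
     (p.2 i l m * tauN p m j k - p.2 m l j * tauN p i m k
      - p.2 m l k * tauN p i j m).
  rewrite -!sumrB; apply: eq_bigr => l _.
  rewrite /E2 /tauN.
  have -> : \sum_(m < n) (p.2 i l m * (p.2 m j k - p.2 m k j)
                + p.2 m l k * (p.2 i m j - p.2 i j m)
                + p.2 m l j * (p.2 i k m - p.2 i m k)) =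
     \sum_(m < n) (p.2 i l m * (p.2 m j k - p.2 m k j) -
        p.2 m l j * (p.2 i m k - p.2 i k m) -
        p.2 m l k * (p.2 i j m - p.2 i m j)).
    by apply: eq_bigr => m _; ring.
  ring.
ring.
Qed.

End Helpers.

Theorem proposition4 (R : realType) (n : nat)
  (gam : CPt R n -> 'I_n -> 'I_n -> 'I_n -> 'I_n -> R) (p : CPt R n) :
  ((forall v w : TV R n, forall i k : 'I_n,
       tgamC gam p v w i k = curv1 p v w i k) /\
   (forall v : TV R n, forall i j k : 'I_n,
       alt12 (gamC gam p v) i j k = nabla2 v (@tauN R n) p i j k))
  <->
  ((forall h r s t : 'I_n,
       gam p h s t r - gam p h r t s =
       \sum_(m < n) (p.2 h r m * p.2 m s t - p.2 h s m * p.2 m r t)) /\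
   (forall h r s t : 'I_n,
       gam p h r s t - gam p h s r t =
       \sum_(m < n) (p.2 h t m * (p.2 m r s - p.2 m s r)
                     + p.2 m t s * (p.2 h m r - p.2 h r m)
                     + p.2 m t r * (p.2 h s m - p.2 h m s)))).
Proof.
pose e (r : 'I_n) : 'I_n -> R := fun j => (j == r)%:R.
pose z : 'I_n -> 'I_n -> 'I_n -> R := fun _ _ _ => 0.
split.
- move=> [H1 H2]; split.
  + move=> h r s t; apply/eqP; rewrite -subr_eq0; apply/eqP.
    have := @diff1 R n gam p (e r, z) (e s, z) h t.
    rewrite H1 subrr (@sum_delta2 R n (E1 R n gam p h t) r s) /E1 => <-; done.
  + move=> h r s t; apply/eqP; rewrite -subr_eq0; apply/eqP.
    have := @diff2 R n gam p (e t, z) h r s.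
    rewrite H2 subrr (@sum_delta R n (E2 R n gam p h r s) t) /E2 => <-; done.
- move=> [H1 H2]; split.
  + move=> v w i k; apply/eqP; rewrite -subr_eq0 diff1; apply/eqP.
    apply: big1 => a _; apply: big1 => b _.
    by rewrite /E1 H1 subrr mulr0.
  + move=> v i j k; apply/eqP; rewrite -subr_eq0 diff2; apply/eqP.
    apply: big1 => l _.
    by rewrite /E2 H2 subrr mulr0.
Qed.
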